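(* For every $n\ge 2$, the diameter of the origami flip graph ${\rm OFG}(M_{2,n})$ is $\lceil n^2/2\rceil$.
   Context: The $2\times n$ Miura-ori $M_{2,n}$ has faces $\alpha_{i,j}$ ($i\in\{1,2\}$, $j\in\{1,\dots,n\}$), interior vertices $x_1,\dots,x_{n-1}$, and creases $e_0$ and $e_{3k-1},e_{3k},e_{3k+1}$ ($k=1,\dots,n-1$). At $x_k$ the creases are left $e_{3k-3}$, top $e_{3k-1}$, right $e_{3k}$, bottom $e_{3k+1}$ (angles adjacent to the left crease obtuse, others acute). Face $\alpha_{1,j}$ is bordered by those of $e_{3j-4}$ (iff $j\ge2$), $e_{3j-3}$, $e_{3j-1}$ (iff $j\le n-1$); $\alpha_{2,j}$ by those of $e_{3j-2}$ (iff $j\ge2$), $e_{3j-3}$, $e_{3j+1}$ (iff $j\le n-1$). An MV assignment $\mu$ maps creases to $\{1,-1\}$; it is locally valid if for each $k$ exactly one of $\mu(e_{3k-1}),\mu(e_{3k}),\mu(e_{3k+1})$ differs from $\mu(e_{3k-3})$. The face flip $\mu_\alpha$ negates $\mu$ on the creases bordering $\alpha$; $\alpha$ is flippable under $\mu$ if $\mu,\mu_\alpha$ are both locally valid. ${\rm OFG}(M_{2,n})$ is the graph whose vertices are the locally valid MV assignments, with $\mu\sim\mu_\alpha$ for each flippable $\alpha$. *)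

(* Defs.v *)
From mathcomp Require Import all_boot.
Set Implicit Arguments. Unset Strict Implicit. Unset Printing Implicit Defensive.

(* Creases of M_{2,n}: e_0 and e_{3k-1}, e_{3k}, e_{3k+1} for k = 1..n-1,
   i.e. the indices m < 3n-1 with m <> 1. *)
Definition crease (n : nat) := {i : 'I_(3 * n - 1) | nat_of_ord i != 1}.

(* An MV assignment: true encodes +1 (say M), false encodes -1 (V). *)
Definition mv (n : nat) := {ffun crease n -> bool}.

(* value of mu on crease e_m (default false for non-creases, never used) *)
Definition mv_at (n : nat) (mu : mv n) (m : nat) : bool :=
  match (insub m : option 'I_(3 * n - 1)) with
  | Some i => match (insub i : option (crease n)) with
              | Some c => mu c
              | None => false
              end
  | None => false
  end.

Definition valid_at (n : nat) (mu : mv n) (k : nat) : bool :=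
  count (fun m => mv_at mu m != mv_at mu (3 * k - 3))
        [:: 3 * k - 1; 3 * k; 3 * k + 1] == 1.

Definition locally_valid (n : nat) (mu : mv n) : bool :=
  all (valid_at mu) (iota 1 (n - 1)).

(* Faces alpha_{i,j}, i in {1,2}, j in {1..n}, encoded 0-based as (i-1, j-1). *)
Definition face (n : nat) := ('I_2 * 'I_n)%type.

(* does crease e_c border face alpha_{i,j} (1-based i, j)? *)
Definition borders (n i j c : nat) : bool :=
  if i == 1 then
    [|| (2 <= j) && (c == 3 * j - 4), c == 3 * j - 3 | (j <= n - 1) && (c == 3 * j - 1)]
  else
    [|| (2 <= j) && (c == 3 * j - 2), c == 3 * j - 3 | (j <= n - 1) && (c == 3 * j + 1)].

Definition face_flip (n : nat) (mu : mv n) (a : face n) : mv n :=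
  [ffun c : crease n =>
     mu c (+) borders n (a.1).+1 (a.2).+1 (nat_of_ord (val c))].

Definition flippable (n : nat) (mu : mv n) (a : face n) : bool :=
  locally_valid mu && locally_valid (face_flip mu a).

Definition ofg_adj (n : nat) : rel (mv n) :=
  fun mu nu => [exists a : face n, flippable mu a && (nu == face_flip mu a)].

Definition ofg_walk (n : nat) (mu nu : mv n) (s : seq (mv n)) : Prop :=
  path (@ofg_adj n) mu s /\ last mu s = nu.

Definition ofg_diameter (n d : nat) : Prop :=
  (forall mu nu : mv n, locally_valid mu -> locally_valid nu ->
     exists s, ofg_walk mu nu s /\ size s <= d) /\
  (exists mu nu : mv n, [/\ locally_valid mu, locally_valid nu &
     forall s, ofg_walk mu nu s -> d <= size s]).

(* Main.v *)
From Stdlib Require Import ZArith Lia Classical.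
Require Import Defs.
From mathcomp Require Import all_boot zify.
Set Implicit Arguments. Unset Strict Implicit. Unset Printing Implicit Defensive.


Definition sg (b : bool) : Z := if b then 1%Z else (-1)%Z.

Lemma mv_at_val n (mu : mv n) (c : crease n) : mv_at mu (val (val c)) = mu c.
Proof. by rewrite /mv_at valK valK. Qed.

Lemma crease_ex n m : m < 3 * n - 1 -> m != 1 -> exists c : crease n, val (val c) = m.
Proof.
move=> h1 h2. exists (exist _ (Ordinal h1) h2). by [].
Qed.

Lemma mv_at_flip n (mu : mv n) a m : m < 3 * n - 1 -> m != 1 ->
  mv_at (face_flip mu a) m = mv_at mu m (+) borders n (a.1).+1 (a.2).+1 m.
Proof.
move=> h1 h2; have [c <-] := crease_ex h1 h2.
by rewrite !mv_at_val /face_flip ffunE.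
Qed.

Lemma mv_at_ffun n (F : nat -> bool) m : m < 3 * n - 1 -> m != 1 ->
  mv_at ([ffun c : crease n => F (val (val c))] : mv n) m = F m.
Proof.
move=> h1 h2; have [c <-] := crease_ex h1 h2.
by rewrite mv_at_val ffunE.
Qed.

Lemma valid_atE n (mu : mv n) j : valid_at mu j.+1 <->
  sg (mv_at mu (3 * j)) = (sg (mv_at mu (3 * j + 2)) + sg (mv_at mu (3 * j + 3))
                          + sg (mv_at mu (3 * j + 4)))%Z.
Proof.
rewrite /valid_at.
have -> : 3 * j.+1 - 3 = 3 * j by lia.
have -> : 3 * j.+1 - 1 = 3 * j + 2 by lia.
have -> : 3 * j.+1 = 3 * j + 3 by lia.
have -> : 3 * j + 3 + 1 = 3 * j + 4 by lia.
rewrite /=; move: (mv_at mu (3 * j)) (mv_at mu (3 * j + 2)) (mv_at mu (3 * j + 3)) (mv_at mu (3 * j + 4)) => [] [] [] []; simpl; split; try done; try lia.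
Qed.

Lemma lvalidP n (mu : mv n) : locally_valid mu <-> forall j, j.+1 < n -> valid_at mu j.+1.
Proof.
rewrite /locally_valid; split.
- move=> /allP H j hj; apply: H; rewrite mem_iota; lia.
- move=> H; apply/allP => x; rewrite mem_iota => hx.
  have -> : x = x.-1.+1 by lia.
  apply: H; lia.
Qed.


Definition is_height n (mu : mv n) (G : bool -> nat -> Z) : Prop :=
  (forall k, k < n -> (G true k - G false k = sg (mv_at mu (3 * k)))%Z) /\
  (forall k, k.+1 < n -> (G true k.+1 - G true k = - sg (mv_at mu (3 * k + 2)))%Z) /\
  (forall k, k.+1 < n -> (G false k.+1 - G false k = sg (mv_at mu (3 * k + 4)))%Z).

Fixpoint htop n (mu : mv n) k : Z :=
  match k with 0 => 0%Z | k'.+1 => (htop mu k' - sg (mv_at mu (3 * k' + 2)))%Z end.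

Definition hgt n (mu : mv n) (r : bool) k : Z :=
  if r then htop mu k else (htop mu k - sg (mv_at mu (3 * k)))%Z.

Lemma valid_height n (mu : mv n) : locally_valid mu -> is_height mu (hgt mu).
Proof.
move=> /lvalidP V; split; [|split].
- move=> k _; rewrite /hgt; lia.
- move=> k _; rewrite /hgt /=; lia.
- move=> k hk; have /valid_atE := V k hk; rewrite /hgt /=.
  have -> : 3 * k.+1 = 3 * k + 3 by lia. lia.
Qed.

Lemma height_valid n (mu : mv n) G : is_height mu G -> locally_valid mu.
Proof.
move=> [H1 [H2 H3]]; apply/lvalidP => j hj; apply/valid_atE.
have := H1 j (ltnW hj); have := H1 j.+1 hj; have := H2 j hj; have := H3 j hj.
have -> : 3 * j.+1 = 3 * j + 3 by lia. lia.
Qed.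

Lemma sg_abs b : Z.abs (sg b) = 1%Z.
Proof. by case: b. Qed.

Lemma sg_inj b1 b2 : sg b1 = sg b2 -> b1 = b2.
Proof. by case: b1; case: b2. Qed.

Lemma sg_cases b : sg b = 1%Z \/ sg b = (-1)%Z.
Proof. by case: b; [left|right]. Qed.

Lemma height_parity n (mu : mv n) G : is_height mu G ->
  forall r k, k < n -> exists q, (G r k - G true 0%N = 2 * q + Z.of_nat k + (if r then 0 else 1))%Z.
Proof.
move=> [H1 [H2 H3]] r k; elim: k r => [|k IH] r hk.
- case: r => /=. exists 0%Z; lia.
  have := H1 0 hk. case: (sg_cases (mv_at mu (3*0))) => ->.
  exists (-1)%Z; lia. exists 0%Z; lia.
- have [q Hq] := IH true (ltnW hk); have [q2 Hq2] := IH false (ltnW hk).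
  case: r.
  + have := H2 k hk; case: (sg_cases (mv_at mu (3*k+2))) => ->;
    [exists (q - 1)%Z | exists q%Z]; lia.
  + have := H3 k hk; case: (sg_cases (mv_at mu (3*k+4))) => ->;
    [exists q2%Z | exists (q2-1)%Z]; lia.
Qed.

Lemma height_parity2 n (mu nu : mv n) G G' : is_height mu G -> is_height nu G' ->
  forall r k, k < n -> exists q, (G r k - G' r k - (G true 0%N - G' true 0%N) = 2 * q)%Z.
Proof.
move=> h h' r k hk.
have [q1 e1] := height_parity h r hk; have [q2 e2] := height_parity h' r hk.
exists (q1 - q2)%Z; lia.
Qed.


Lemma flip_rung n (mu : mv n) (a : face n) k : k < n ->
  mv_at (face_flip mu a) (3 * k) = mv_at mu (3 * k) (+) (k == a.2).
Proof.
move=> hk; rewrite mv_at_flip; [|lia|lia]. congr (_ (+) _).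
case: a => [[[|[|i]] hi] [c hc]] //=; rewrite /borders /=; lia.
Qed.

Lemma flip_top n (mu : mv n) (a : face n) k : k.+1 < n ->
  mv_at (face_flip mu a) (3 * k + 2) = mv_at mu (3 * k + 2) (+)
     ((nat_of_ord a.1 == 0) && ((k.+1 == a.2) || (k == a.2))).
Proof.
move=> hk; rewrite mv_at_flip; [|lia|lia]. congr (_ (+) _).
case: a => [[[|[|i]] hi] [c hc]] //=; rewrite /borders /=; lia.
Qed.

Lemma flip_bot n (mu : mv n) (a : face n) k : k.+1 < n ->
  mv_at (face_flip mu a) (3 * k + 4) = mv_at mu (3 * k + 4) (+)
     ((nat_of_ord a.1 != 0) && ((k.+1 == a.2) || (k == a.2))).
Proof.
move=> hk; rewrite mv_at_flip; [|lia|lia]. congr (_ (+) _).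
case: a => [[[|[|i]] hi] [c hc]] //=; rewrite /borders /=; lia.
Qed.

Lemma sg_xor b t : sg (b (+) t) = if t then (- sg b)%Z else sg b.
Proof. by case: b; case: t. Qed.

Definition fr n (a : face n) : bool := nat_of_ord a.1 == 0.

Lemma flip_E n (mu : mv n) (a : face n) G G' :
  is_height mu G -> is_height (face_flip mu a) G' ->
  exists K, (forall r k, k < n -> ~~ ((r == fr a) && (k == a.2)) -> G' r k = (G r k + K)%Z) /\
            Z.abs (G' (fr a) a.2 - G (fr a) a.2 - K) = 2%Z.
Proof.
move=> [H1 [H2 H3]] [H1' [H2' H3']].
have ha2 : (a.2 < n) by [].
rewrite /fr; case ha: (nat_of_ord a.1 == 0).
- pose K := (G' false 0%N - G false 0%N)%Z.
  have Hb : forall k, k < n -> G' false k = (G false k + K)%Z.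
    elim=> [|k IH] hk; first by rewrite /K; lia.
    have := H3 k hk; have := H3' k hk; rewrite flip_bot // ha /= addbF.
    have := IH (ltnW hk); lia.
  exists K; split.
  + move=> [] k hk /=; last by move=> _; exact: Hb.
    move=> hne; have := H1 k hk; have := H1' k hk; rewrite flip_rung // sg_xor.
    rewrite (negbTE hne); have := Hb k hk; lia.
  + have := H1 _ ha2; have := H1' _ ha2; rewrite flip_rung // eqxx sg_xor.
    have := Hb _ ha2; case: (sg_cases (mv_at mu (3 * a.2))); lia.
- pose K := (G' true 0%N - G true 0%N)%Z.
  have Hb : forall k, k < n -> G' true k = (G true k + K)%Z.
    elim=> [|k IH] hk; first by rewrite /K; lia.
    have := H2 k hk; have := H2' k hk; rewrite flip_top // ha /= addbF.
    have := IH (ltnW hk); lia.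
  exists K; split.
  + move=> [] k hk /=; first by move=> _; exact: Hb.
    move=> hne; have := H1 k hk; have := H1' k hk; rewrite flip_rung // sg_xor.
    rewrite (negbTE hne); have := Hb k hk; lia.
  + have := H1 _ ha2; have := H1' _ ha2; rewrite flip_rung // eqxx sg_xor.
    have := Hb _ ha2; case: (sg_cases (mv_at mu (3 * a.2))); lia.
Qed.

Definition upd (G : bool -> nat -> Z) (r0 : bool) (c0 : nat) (v : Z) : bool -> nat -> Z :=
  fun r k => if (r == r0) && (k == c0) then v else G r k.

Lemma flip_fwd n (mu : mv n) (a : face n) G x :
  is_height mu G -> G (~~ fr a) a.2 = x ->
  (0 < a.2 -> G (fr a) a.2.-1 = x) -> (a.2.+1 < n -> G (fr a) a.2.+1 = x) ->
  is_height (face_flip mu a) (upd G (fr a) a.2 (x + x - G (fr a) a.2)%Z).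
Proof.
move=> [H1 [H2 H3]] Hx Hl Hr.
rewrite /fr in Hx Hl Hr *.
set c := nat_of_ord a.2 in Hx Hl Hr *.
have hc : c < n by rewrite /c.
case ha: (nat_of_ord a.1 == 0) in Hx Hl Hr *; rewrite /= in Hx.
- set v := (x + x - G true c)%Z.
  split; [|split].
  + move=> k hk; rewrite flip_rung // sg_xor /upd; have := H1 k hk.
    have [->|hne] := eqVneq k c; rewrite /= ?eqxx; try try rewrite /v; lia.
  + move=> k hk; rewrite flip_top // ha sg_xor /upd /=; have := H2 k hk.
    have [e1|hne1] := eqVneq k.+1 c.
    * have hk' : k != c by lia. rewrite e1 ?eqxx ?(negbTE hk') /=.
      have := Hl (ltac:(lia)); have -> : c.-1 = k by lia. try rewrite /v; lia.
    * have [e2|hne2] := eqVneq k c.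
      -- rewrite e2 ?eqxx /= ?(negbTE hne1) /=. rewrite -e2 in Hr. have := Hr hk. 
         rewrite e2 /=. try rewrite /v; lia.
      -- rewrite ?(negbTE hne1) ?(negbTE hne2) /=; lia.
  + move=> k hk; rewrite flip_bot // ha sg_xor /upd /=; have := H3 k hk; lia.
- split; [|split].
  + move=> k hk; rewrite flip_rung // sg_xor /upd; have := H1 k hk.
    have [->|hne] := eqVneq k c; rewrite /= ?eqxx; try try rewrite /v; lia.
  + move=> k hk; rewrite flip_top // ha sg_xor /upd /=; have := H2 k hk; lia.
  + move=> k hk; rewrite flip_bot // ha sg_xor /upd /=; have := H3 k hk.
    have [e1|hne1] := eqVneq k.+1 c.
    * have hk' : k != c by lia. rewrite e1 ?eqxx ?(negbTE hk') /=.
      have := Hl (ltac:(lia)); have -> : c.-1 = k by lia. try rewrite /v; lia.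
    * have [e2|hne2] := eqVneq k c.
      -- rewrite e2 ?eqxx /= ?(negbTE hne1) /=. rewrite -e2 in Hr. have := Hr hk. 
         rewrite e2 /=. try rewrite /v; lia.
      -- rewrite ?(negbTE hne1) ?(negbTE hne2) /=; lia.
Qed.


Fixpoint zsum (f : nat -> Z) (n : nat) : Z :=
  match n with 0 => 0%Z | k.+1 => (zsum f k + f k)%Z end.

Lemma zsum_le f g n : (forall k, k < n -> (f k <= g k)%Z) -> (zsum f n <= zsum g n)%Z.
Proof. elim: n => [|n IH] H //=. have := IH (fun k hk => H k (ltnW hk)). have := H n (ltnSn n). lia. Qed.

Lemma zsum_ext f g n : (forall k, k < n -> f k = g k) -> zsum f n = zsum g n.
Proof. elim: n => [|n IH] H //=. rewrite IH ?H //. move=> k hk; apply: H; exact: ltnW. Qed.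

Lemma zsum_ge0 f n : (forall k, k < n -> (0 <= f k)%Z) -> (0 <= zsum f n)%Z.
Proof. elim: n => [|n IH] H //=. have := IH (fun k hk => H k (ltnW hk)). have := H n (ltnSn n). lia. Qed.

Lemma zsum_ge_term f n k0 : (forall k, k < n -> (0 <= f k)%Z) -> k0 < n -> (f k0 <= zsum f n)%Z.
Proof.
elim: n => [|n IH] H hk0 //=.
have H' := (fun k hk => H k (ltnW hk)).
case: (ltnP k0 n) => h.
- have := IH H' h. have := H n (ltnSn n). lia.
- have -> : k0 = n by lia. have := zsum_ge0 H'. lia.
Qed.

Lemma zsum_upd f g n k0 : (forall k, k < n -> k <> k0 -> f k = g k) -> k0 < n ->
  zsum f n = (zsum g n + f k0 - g k0)%Z.
Proof.
elim: n => [|n IH] H hk0 //=.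
case: (ltnP k0 n) => h.
- rewrite IH //; last by move=> k hk; apply: H; exact: ltnW.
  have -> : f n = g n by apply: H => //; lia. lia.
- have -> : k0 = n by lia.
  rewrite (@zsum_ext f g n); first lia.
  move=> k hk; apply: H; lia.
Qed.

Lemma zsum_le_upd f g n k0 d : (0 <= d)%Z ->
  (forall k, k < n -> (f k <= g k + (if k == k0 then d else 0))%Z) ->
  (zsum f n <= zsum g n + d)%Z.
Proof.
move=> hd; elim: n => [|n IH] H /=; first lia.
have := IH (fun k hk => H k (ltnW hk)).
have := H n (ltnSn n).
case: (eqVneq n k0) => [e|ne].
- (* previous terms have no bonus *)
  move=> h1 _.
  have : (zsum f n <= zsum g n)%Z.
    apply: zsum_le => k hk. have := H k (ltnW hk). have -> : (k == k0) = false by lia. lia.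
  lia.
- move=> h1 h2. lia.
Qed.

Lemma zsum_add f a b : zsum f (a + b) = (zsum f a + zsum (fun k => f (a + k)%N) b)%Z.
Proof. elim: b => [|b IH] /=; first by rewrite addn0; lia. rewrite addnS /= IH; lia. Qed.

Lemma zsum_shift1 f b : zsum f b.+1 = (f 0%N + zsum (fun k => f k.+1) b)%Z.
Proof.
elim: b => [|b IH]; first by simpl; lia.
change (zsum f b.+2) with (zsum f b.+1 + f b.+1)%Z. rewrite IH.
change (zsum (fun k => f k.+1) b.+1) with (zsum (fun k => f k.+1) b + f b.+1)%Z. lia.
Qed.

Lemma zsum_rev f n : zsum f n = zsum (fun k => f (n.-1 - k)) n.
Proof.
elim: n f => [|n IH] f; first by [].
rewrite [in RHS]zsum_shift1 /=.
change (zsum f n.+1) with (zsum f n + f n)%Z.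
rewrite IH subn0.
have -> : zsum (fun k => f (n.-1 - k)) n = zsum (fun k => f (n - k.+1)) n.
  apply: zsum_ext => k hk. congr f. lia.
lia.
Qed.

Lemma zsum_lin (al be : Z) m :
  (2 * zsum (fun k => al * Z.of_nat k + be) m = al * Z.of_nat m * (Z.of_nat m - 1) + 2 * be * Z.of_nat m)%Z.
Proof. elim: m => [|m IH]; first by simpl; lia. change (zsum (fun k => al * Z.of_nat k + be)%Z m.+1) with (zsum (fun k => al * Z.of_nat k + be)%Z m + (al * Z.of_nat m + be))%Z. nia. Qed.


Lemma lip (w : nat -> Z) n : (forall j, j.+1 < n -> (Z.abs (w j.+1 - w j) <= 2)%Z) ->
  forall i j, i < n -> j < n -> (Z.abs (w i - w j) <= 2 * Z.abs (Z.of_nat i - Z.of_nat j))%Z.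
Proof.
move=> H.
have K : forall d i, i + d < n -> (Z.abs (w (i + d)%N - w i) <= 2 * Z.of_nat d)%Z.
  elim=> [|d IH] i hi; first by rewrite addn0; lia.
  have := IH i (ltac:(lia)). rewrite addnS. have := H (i + d) (ltac:(lia)). lia.
move=> i j hi hj. case: (leqP i j) => h.
- have := K (j - i) i (ltac:(lia)). have -> : i + (j - i) = j by lia. lia.
- have := K (i - j) j (ltac:(lia)). have -> : j + (i - j) = i by lia. lia.
Qed.

Lemma zsum_plus (f g : nat -> Z) n : zsum (fun j => f j + g j)%Z n = (zsum f n + zsum g n)%Z.
Proof.
elim: n => [|n IH]; first by [].
change (zsum (fun j => f j + g j)%Z n.+1) with (zsum (fun j => f j + g j)%Z n + (f n + g n))%Z.
rewrite IH /=. lia.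
Qed.

Lemma halves_bound (F BL BR : nat -> Z) m :
  (forall k, k < m -> (F (m.-1 - k)%N <= BL k)%Z) -> (forall k, k < m -> (F (m + k)%N <= BR k)%Z) ->
  (zsum F (m + m) <= zsum BL m + zsum BR m)%Z.
Proof.
move=> HL HR. rewrite zsum_add (zsum_rev F m).
have := zsum_le HL. have := zsum_le HR. lia.
Qed.

Lemma thirds_bound (F BL BR : nat -> Z) B0 m :
  (F m <= B0)%Z ->
  (forall k, k < m -> (F (m.-1 - k)%N <= BL k)%Z) -> (forall k, k < m -> (F (m.+1 + k)%N <= BR k)%Z) ->
  (zsum F (m.+1 + m) <= zsum BL m + B0 + zsum BR m)%Z.
Proof.
move=> H0 HL HR. rewrite zsum_add /= (zsum_rev F m).
have := zsum_le HL. have := zsum_le HR. lia.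
Qed.

Lemma upper_seq (w : nat -> Z) n : 0 < n ->
  (forall j, j.+1 < n -> (Z.abs (w j.+1 - w j) <= 2)%Z) ->
  exists c, (2 * zsum (fun j => Z.abs (w j - 2 * c)) n <= Z.of_nat n * Z.of_nat n + 1)%Z.
Proof.
move=> hn H; have L := lip H.
have [m [hm|[hm hm1]]] : exists m, n = m.+1 + m \/ (n = m + m /\ 0 < m).
  exists (n %/ 2). lia.
-
  have hmn : m < n by lia.
  case: (Z.Even_or_Odd (w m)) => [[q hq]|[q hq]].
  + exists q. rewrite hm.
    have B := @thirds_bound (fun j => Z.abs (w j - 2 * q)) (fun k => 2 * Z.of_nat k + 2)%Z
                 (fun k => 2 * Z.of_nat k + 2)%Z 0%Z m.
    have := zsum_lin 2 2 m.
    have : (zsum (fun j => Z.abs (w j - 2 * q)) (m.+1 + m) <=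
      zsum (fun k => 2 * Z.of_nat k + 2) m + 0 + zsum (fun k => 2 * Z.of_nat k + 2) m)%Z.
      apply: B.
      * lia.
      * move=> k hk; cbv beta. have := L (m.-1 - k) m (ltac:(lia)) hmn. lia.
      * move=> k hk; cbv beta. have := L (m.+1 + k) m (ltac:(lia)) hmn. lia.
    lia.
  + pose S0 := zsum (fun j => Z.abs (w j - 2 * q)) n.
    pose S1 := zsum (fun j => Z.abs (w j - 2 * (q + 1))) n.
    have HS : (S0 + S1 = zsum (fun j => Z.abs (w j - 2 * q) + Z.abs (w j - 2 * (q + 1))) n)%Z.
      by rewrite /S0 /S1 zsum_plus.
    have : (zsum (fun j => Z.abs (w j - 2 * q) + Z.abs (w j - 2 * (q + 1))) (m.+1 + m) <=
      zsum (fun k => 4 * Z.of_nat k + 4) m + 2 + zsum (fun k => 4 * Z.of_nat k + 4) m)%Z.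
      apply: thirds_bound.
      * lia.
      * move=> k hk; cbv beta. have := L (m.-1 - k) m (ltac:(lia)) hmn. lia.
      * move=> k hk; cbv beta. have := L (m.+1 + k) m (ltac:(lia)) hmn. lia.
    rewrite -hm -HS. have := zsum_lin 4 4 m.
    case: (Z.le_gt_cases S0 S1) => h.
    * exists q. rewrite -/S0. lia.
    * exists (q + 1)%Z. rewrite -/S1. lia.
-
  have hm0 : m.-1 < n by lia. have hmn : m < n by lia.
  have Hab := H m.-1 (ltac:(lia)). rewrite (_ : m.-1.+1 = m) in Hab; last by lia.
  case: (Z.Even_or_Odd (w m.-1)) => [[q hq]|[q hq]].
  + exists q. rewrite hm.
    have : (zsum (fun j => Z.abs (w j - 2 * q)) (m + m) <=
      zsum (fun k => 2 * Z.of_nat k) m + zsum (fun k => 2 * Z.of_nat k + 2) m)%Z.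
      apply: halves_bound.
      * move=> k hk; cbv beta. have := L (m.-1 - k) m.-1 (ltac:(lia)) hm0. lia.
      * move=> k hk; cbv beta. have := L (m + k) m (ltac:(lia)) hmn. lia.
    have := zsum_lin 2 2 m. have := zsum_lin 2 0 m.
    have -> : zsum (fun k => 2 * Z.of_nat k)%Z m = zsum (fun k => 2 * Z.of_nat k + 0)%Z m.
      apply: zsum_ext => k _; lia.
    lia.
  case: (Z.Even_or_Odd (w m)) => [[q' hq']|[q' hq']].
  + exists q'. rewrite hm.
    have : (zsum (fun j => Z.abs (w j - 2 * q')) (m + m) <=
      zsum (fun k => 2 * Z.of_nat k + 2) m + zsum (fun k => 2 * Z.of_nat k) m)%Z.
      apply: halves_bound.
      * move=> k hk; cbv beta. have := L (m.-1 - k) m.-1 (ltac:(lia)) hm0. lia.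
      * move=> k hk; cbv beta. have := L (m + k) m (ltac:(lia)) hmn. lia.
    have := zsum_lin 2 2 m. have := zsum_lin 2 0 m.
    have -> : zsum (fun k => 2 * Z.of_nat k)%Z m = zsum (fun k => 2 * Z.of_nat k + 0)%Z m.
      apply: zsum_ext => k _; lia.
    lia.
  case: (Z.eq_dec q q') => [eqq|neq].
  + subst q'.
    pose S0 := zsum (fun j => Z.abs (w j - 2 * q)) n.
    pose S1 := zsum (fun j => Z.abs (w j - 2 * (q + 1))) n.
    have HS : (S0 + S1 = zsum (fun j => Z.abs (w j - 2 * q) + Z.abs (w j - 2 * (q + 1))) n)%Z.
      by rewrite /S0 /S1 zsum_plus.
    have : (zsum (fun j => Z.abs (w j - 2 * q) + Z.abs (w j - 2 * (q + 1))) (m + m) <=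
      zsum (fun k => 4 * Z.of_nat k + 2) m + zsum (fun k => 4 * Z.of_nat k + 2) m)%Z.
      apply: halves_bound.
      * move=> k hk; cbv beta. have := L (m.-1 - k) m.-1 (ltac:(lia)) hm0. lia.
      * move=> k hk; cbv beta. have := L (m + k) m (ltac:(lia)) hmn. lia.
    rewrite -hm -HS. have := zsum_lin 4 2 m.
    case: (Z.le_gt_cases S0 S1) => h.
    * exists q. rewrite -/S0. lia.
    * exists (q + 1)%Z. rewrite -/S1. lia.
  + exists (Z.max q q'). rewrite hm.
    have : (zsum (fun j => Z.abs (w j - 2 * Z.max q q')) (m + m) <=
      zsum (fun k => 2 * Z.of_nat k + 1) m + zsum (fun k => 2 * Z.of_nat k + 1) m)%Z.
      apply: halves_bound.
      * move=> k hk; cbv beta. have := L (m.-1 - k) m.-1 (ltac:(lia)) hm0. lia.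
      * move=> k hk; cbv beta. have := L (m + k) m (ltac:(lia)) hmn. lia.
    have := zsum_lin 2 1 m.
    lia.
Qed.


Lemma tri_sum2 n : zsum (fun k => Z.abs (2 * Z.of_nat n - 4 * Z.of_nat k))%Z n =
   (Z.of_nat n * Z.of_nat n + Z.of_nat (n %% 2))%Z /\
   zsum (fun k => Z.abs (2 * Z.of_nat n.+1 - 4 * Z.of_nat k))%Z n.+1 =
   (Z.of_nat n.+1 * Z.of_nat n.+1 + Z.of_nat (n.+1 %% 2))%Z.
Proof.
elim: n => [|n [IH1 IH2]]; first by split.
split; first exact: IH2.
rewrite zsum_shift1.
have -> : zsum (fun k => Z.abs (2 * Z.of_nat n.+2 - 4 * Z.of_nat k.+1))%Z n.+1 =
          zsum (fun k => Z.abs (2 * Z.of_nat n - 4 * Z.of_nat k))%Z n.+1.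
  apply: zsum_ext => k _. congr Z.abs. lia.
change (zsum (fun k => Z.abs (2 * Z.of_nat n - 4 * Z.of_nat k))%Z n.+1) with
  (zsum (fun k => Z.abs (2 * Z.of_nat n - 4 * Z.of_nat k))%Z n + Z.abs (2 * Z.of_nat n - 4 * Z.of_nat n))%Z.
rewrite IH1.
have -> : n.+2 %% 2 = n %% 2 by rewrite -addn2 modnDr.
lia.
Qed.

Lemma tri_sum n : zsum (fun k => Z.abs (2 * Z.of_nat n - 4 * Z.of_nat k))%Z n =
   (Z.of_nat n * Z.of_nat n + Z.of_nat (n %% 2))%Z.
Proof. by case: (tri_sum2 n). Qed.

Lemma lower_sum n (C : Z) :
  (Z.of_nat n * Z.of_nat n + Z.of_nat (n %% 2) <=
   zsum (fun k => Z.abs (2 * Z.of_nat k - C) + Z.abs (2 * Z.of_nat k + 2 - C))%Z n)%Z.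
Proof.
rewrite zsum_plus -tri_sum.
rewrite [zsum (fun k => Z.abs (2 * Z.of_nat k + 2 - C))%Z n]zsum_rev.
rewrite -zsum_plus. apply: zsum_le => k hk. cbv beta.
have -> : Z.of_nat (n.-1 - k) = (Z.of_nat n - 1 - Z.of_nat k)%Z by lia.
lia.
Qed.


Definition Pot n (G G' : bool -> nat -> Z) (C : Z) : Z :=
  zsum (fun k => Z.abs (G true k - G' true k - C) + Z.abs (G false k - G' false k - C))%Z n.

Lemma height_shift n (mu : mv n) G K : is_height mu G -> is_height mu (fun r k => G r k + K)%Z.
Proof. move=> [H1 [H2 H3]]; split; [|split] => k hk; [have := H1 k hk|have := H2 k hk|have := H3 k hk]; lia. Qed.

Lemma heights_const n (mu : mv n) G G' : is_height mu G -> is_height mu G' ->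
  exists K, forall r k, k < n -> G' r k = (G r k + K)%Z.
Proof.
move=> [H1 [H2 H3]] [H1' [H2' H3']].
exists (G' true 0%N - G true 0%N)%Z.
have Ht : forall k, k < n -> G' true k = (G true k + (G' true 0%N - G true 0%N))%Z.
  elim=> [|k IH] hk; first lia.
  have := IH (ltnW hk); have := H2 k hk; have := H2' k hk; lia.
move=> [] k hk; first exact: Ht.
have := Ht k hk; have := H1 k hk; have := H1' k hk; lia.
Qed.

Lemma heights_eq_mu n (mu nu : mv n) G G' C : is_height mu G -> is_height nu G' ->
  (forall r k, k < n -> G r k = (G' r k + C)%Z) -> mu = nu.
Proof.
move=> [H1 [H2 H3]] [H1' [H2' H3']] E.
apply/ffunP => c. rewrite -!mv_at_val.
have hm : val (val c) < 3 * n - 1 by exact: ltn_ord.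
have hm1 : val (val c) != 1 by exact: (valP c).
move: hm hm1; set m := val (val c) => hm hm1.
have [q [e|[e|e]]] : exists q, m = 3 * q \/ m = 3 * q + 2 \/ m = 3 * q + 4.
  exists (if m %% 3 == 1 then (m %/ 3).-1 else m %/ 3). 
  have := divn_eq m 3. have := ltn_pmod m (isT : 0 < 3). 
  case: ifP => h; lia.
- rewrite e; apply: sg_inj. have hq : q < n by lia.
  rewrite -H1 // -H1' // !E //; lia.
- rewrite e; apply: sg_inj. have hq : q.+1 < n by lia.
  have := H2 q hq; have := H2' q hq; rewrite !E //; try lia.
- rewrite e; apply: sg_inj. have hq : q.+1 < n by lia.
  rewrite -H3 // -H3' // !E //; lia.
Qed.

Lemma zsum_zero f n : (forall k, k < n -> f k = 0%Z) -> zsum f n = 0%Z.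
Proof. elim: n => [|n IH] H //=. rewrite IH ?H //; move=> k hk; apply: H; exact: ltnW. Qed.

Lemma walk_lower n (s : seq (mv n)) : forall (mu nu : mv n) G',
  ofg_walk mu nu s -> is_height nu G' ->
  exists G, is_height mu G /\ (Pot n G G' 0 <= 2 * Z.of_nat (size s))%Z.
Proof.
elim: s => [|mu1 s IH] mu nu G' [Hp Hl] Hh.
- rewrite /= in Hl; subst nu. exists G'; split => //.
  rewrite /Pot zsum_zero; first by simpl; lia. move=> k _; lia.
- move: Hp => /= /andP [Hadj Hp].
  have [G1 [Hh1 HP1]] := IH mu1 nu G' (conj Hp Hl) Hh.
  move: Hadj => /existsP [a /andP [/andP [V0 V1] /eqP Ea]].
  subst mu1.
  have Hh0 := valid_height V0.
  have [K [HK1 HK2]] := flip_E Hh0 Hh1.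
  exists (fun r k => hgt mu r k + K)%Z; split; first exact: height_shift.
  have : (Pot n (fun r k => hgt mu r k + K)%Z G' 0 <= Pot n G1 G' 0 + 2)%Z.
    apply: (@zsum_le_upd _ _ n a.2 2%Z); first lia.
    move=> k hk; cbv beta.
    have [e|ne] := eqVneq k a.2.
    + subst k. rewrite ?eqxx.
      move: HK2 (HK1 (~~ fr a) a.2 hk). case: (fr a) => /= h2 h3.
      * rewrite h3 //. lia.
      * rewrite h3 //. lia.
    + rewrite ?(negbTE ne) !HK1 //; try (apply/negP => /andP [_ h]; by rewrite h in ne).
      lia.
  rewrite /= ; lia.
Qed.


Lemma list_argmax (T : eqType) (l : seq T) (key : T -> Z) (P : pred T) :
  has P l -> exists x, [/\ x \in l, P x & forall y, y \in l -> P y -> (key y <= key x)%Z].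
Proof.
elim: l => [|y l IH] //= /orP [Py|Hl].
- case Hl: (has P l).
  + have [x [xl Px Hx]] := IH Hl.
    case: (Z.le_gt_cases (key x) (key y)) => h.
    * exists y; split => //; first by rewrite inE eqxx.
      move=> z; rewrite inE => /orP [/eqP -> _|zl Pz]; first lia.
      have := Hx z zl Pz; lia.
    * exists x; split => //; first by rewrite inE xl orbT.
      move=> z; rewrite inE => /orP [/eqP -> _|zl Pz]; first lia.
      exact: Hx.
  + exists y; split => //; first by rewrite inE eqxx.
    move=> z; rewrite inE => /orP [/eqP -> _|zl Pz]; first lia.
    by move/hasP: Hl => Hl; exfalso; apply: Hl; exists z.
- have [x [xl Px Hx]] := IH Hl.
  case Py: (P y).
  + case: (Z.le_gt_cases (key x) (key y)) => h.
    * exists y; split => //; first by rewrite inE eqxx.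
      move=> z; rewrite inE => /orP [/eqP -> _|zl Pz]; first lia.
      have := Hx z zl Pz; lia.
    * exists x; split => //; first by rewrite inE xl orbT.
      move=> z; rewrite inE => /orP [/eqP -> _|zl Pz]; first lia.
      exact: Hx.
  + exists x; split => //; first by rewrite inE xl orbT.
    move=> z; rewrite inE => /orP [/eqP -> Pz|zl Pz]; first by rewrite Py in Pz.
    exact: Hx.
Qed.

Definition faces n : seq (bool * nat) :=
  map (pair true) (iota 0 n) ++ map (pair false) (iota 0 n).

Lemma mem_faces n r k : ((r, k) \in faces n) = (k < n).
Proof.
rewrite /faces mem_cat.
have inj : forall b, injective (@pair bool nat b) by move=> b x y [].
case: r.
- rewrite (mem_map (inj true)) mem_iota.
  have -> : ((true, k) \in map (pair false) (iota 0 n)) = false.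
    by apply/mapP => [[x _ []]].
  rewrite orbF; lia.
- rewrite (mem_map (inj false)) mem_iota.
  have -> : ((false, k) \in map (pair true) (iota 0 n)) = false.
    by apply/mapP => [[x _ []]].
  rewrite /=; lia.
Qed.

Definition mkface n (r : bool) k (h : k < n) : face n :=
  ((if r then (ord0 : 'I_2) else (ord_max : 'I_2)), Ordinal h).

Lemma fr_mkface n r k (h : k < n) : fr (mkface r h) = r.
Proof. by case: r. Qed.

Definition Ev n (G G' : bool -> nat -> Z) C : Prop :=
  forall r k, k < n -> exists q, (G r k - G' r k - C = 2 * q)%Z.

Lemma adj_rung n (mu : mv n) G r k : is_height mu G -> k < n -> Z.abs (G r k - G (~~ r) k) = 1%Z.
Proof. move=> [H1 _] hk; have := H1 k hk; case: (sg_cases (mv_at mu (3 * k))); case: r => /=; lia. Qed.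

Lemma adj_row n (mu : mv n) G r k : is_height mu G -> k.+1 < n -> Z.abs (G r k.+1 - G r k) = 1%Z.
Proof.
move=> [_ [H2 H3]] hk; case: r.
- have := H2 k hk; case: (sg_cases (mv_at mu (3 * k + 2))); lia.
- have := H3 k hk; case: (sg_cases (mv_at mu (3 * k + 4))); lia.
Qed.

Lemma greedy n (mu nu : mv n) G G' C : is_height mu G -> is_height nu G' -> Ev n G G' C ->
  (exists r k, k < n /\ (G r k - G' r k - C <> 0)%Z) ->
  exists a G1, [/\ flippable mu a, is_height (face_flip mu a) G1, Ev n G1 G' C &
                  (Pot n G1 G' C + 2 = Pot n G G' C)%Z].
Proof.
move=> Hh Hh' HE [r1 [k1 [hk1 hne]]].
have [eps [Heps [r2 [k2 [hk2 hpos]]]]] : exists eps, (eps = 1 \/ eps = -1)%Z /\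
   exists r k, k < n /\ (0 < eps * (G r k - G' r k - C))%Z.
  case: (Z.lt_total (G r1 k1 - G' r1 k1 - C) 0) => [h|[h|h]].
  - exists (-1)%Z; split; [by right|]; exists r1, k1; split => //; lia.
  - lia.
  - exists 1%Z; split; [by left|]; exists r1, k1; split => //; lia.
pose key1 (x : bool * nat) := (eps * (G x.1 x.2 - G' x.1 x.2 - C))%Z.
have [x1 [x1l _ Hx1]] := @list_argmax _ (faces n) key1 predT
  (ltac:(apply/hasP; exists (r2, k2) => //; by rewrite mem_faces)).
pose P2 := fun y => Z.eqb (key1 y) (key1 x1).
have [v [vl Pv Hv]] := @list_argmax _ (faces n) (fun y => eps * G y.1 y.2)%Z P2
  (ltac:(apply/hasP; exists x1 => //; by rewrite /P2 Z.eqb_refl)).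
move: v vl Pv Hv => [r0 c0] vl Pv Hv.
rewrite mem_faces in vl.
move: Pv; rewrite /P2 => /Z.eqb_spec Pv.
have Hmax : forall r k, k < n -> (key1 (r, k) <= key1 (r0, c0))%Z.
  move=> r k hk. rewrite Pv. apply: Hx1 => //. by rewrite mem_faces.
have hpos0 : (0 < key1 (r0, c0))%Z.
  have := Hmax r2 k2 hk2. rewrite /key1 /=. lia.
have [q0 Hq0] := HE r0 c0 vl.
have Nb : forall r k, k < n -> Z.abs (G r k - G r0 c0) = 1%Z -> Z.abs (G' r k - G' r0 c0) = 1%Z ->
    G r k = (G r0 c0 - eps)%Z.
  move=> r k hk h1 h2.
  case: (Z.eq_dec (G r k) (G r0 c0 - eps)) => // hne'.
  have e : G r k = (G r0 c0 + eps)%Z by case: Heps => Heps; rewrite Heps in hne' *; lia.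
  have hkk : key1 (r, k) = key1 (r0, c0).
    have := Hmax r k hk. rewrite /key1 /=. case: Heps => Heps; rewrite Heps in e *; lia.
  have := Hv (r, k) (ltac:(by rewrite mem_faces)) (ltac:(by rewrite /P2 hkk -Pv Z.eqb_refl)).
  rewrite /=. case: Heps => Heps; rewrite Heps in e *; lia.
pose x := (G r0 c0 - eps)%Z.
pose a := mkface r0 vl.
have fra : fr a = r0 := fr_mkface r0 vl.
have a2 : nat_of_ord a.2 = c0 := erefl.
have Hfw : is_height (face_flip mu a) (upd G (fr a) a.2 (x + x - G (fr a) a.2)%Z).
  apply: flip_fwd => //; rewrite fra a2.
  - apply: Nb => //.
    + have := adj_rung r0 Hh vl. lia.
    + have := adj_rung r0 Hh' vl. lia.
  - move=> hc. have hc' : c0.-1.+1 = c0 by lia.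
    apply: Nb; first lia.
    + have := adj_row r0 Hh (ltac:(lia) : c0.-1.+1 < n). rewrite hc'. lia.
    + have := adj_row r0 Hh' (ltac:(lia) : c0.-1.+1 < n). rewrite hc'. lia.
  - move=> hc. apply: Nb => //.
    + have := adj_row r0 Hh hc. lia.
    + have := adj_row r0 Hh' hc. lia.
rewrite fra a2 in Hfw.
exists a, (upd G r0 c0 (x + x - G r0 c0)%Z); split => //.
- by rewrite /flippable (height_valid Hh) (height_valid Hfw).
- move=> r k hk. rewrite /upd.
  case: (boolP ((r == r0) && (k == c0))) => [/andP [/eqP er /eqP ek]|_]; last exact: HE.
  subst r k. exists (q0 - eps)%Z. rewrite /x. lia.
- rewrite /Pot (@zsum_upd _ (fun k => Z.abs (G true k - G' true k - C) + Z.abs (G false k - G' false k - C))%Z n c0) //.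
  + rewrite /upd eqxx !andbT.
    have : (0 < eps * (G r0 c0 - G' r0 c0 - C))%Z := hpos0. rewrite /x.
    have Eft : (false == true) = false := erefl. have Etf : (true == false) = false := erefl.
    move: Hq0 Heps Eft Etf; clear; case: r0 => Hq0 [] -> Eft Etf h; rewrite ?eqxx ?Eft ?Etf; cbv iota beta; lia.
  + move=> k hk hkne. rewrite /upd.
    have -> : (k == c0) = false by apply/eqP.
    by rewrite !andbF.
Qed.


Lemma walk_upper n N : forall (mu nu : mv n) G G' C,
  is_height mu G -> is_height nu G' -> Ev n G G' C ->
  (Pot n G G' C <= 2 * Z.of_nat N)%Z -> exists s, ofg_walk mu nu s /\ size s <= N.
Proof.
elim: N => [|N IH] mu nu G G' C Hh Hh' HE HP.
- case: (classic (exists r k, k < n /\ (G r k - G' r k - C <> 0)%Z)) => [[r [k [hk hne]]]|hno].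
  + have := @zsum_ge_term (fun k => Z.abs (G true k - G' true k - C) + Z.abs (G false k - G' false k - C))%Z n k
              (ltac:(move=> j _; lia)) hk.
    rewrite -/(Pot n G G' C). case: r hne => hne; lia.
  + have E : forall r k, k < n -> G r k = (G' r k + C)%Z.
      move=> r k hk. case: (Z.eq_dec (G r k - G' r k - C) 0) => h; first lia.
      exfalso; apply: hno; exists r, k; split => //.
    have := heights_eq_mu Hh Hh' E => ->.
    by exists [::].
- case: (classic (exists r k, k < n /\ (G r k - G' r k - C <> 0)%Z)) => [Hex|hno].
  + have [a [G1 [Hfl Hh1 HE1 HP1]]] := greedy Hh Hh' HE Hex.
    have [s [[Hp Hl] Hs]] := IH _ _ _ _ _ Hh1 Hh' HE1 (ltac:(lia)).
    exists (face_flip mu a :: s); split; last by rewrite /=; lia.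
    split => //=. rewrite Hp andbT. apply/existsP; exists a. by rewrite Hfl eqxx.
  + have E : forall r k, k < n -> G r k = (G' r k + C)%Z.
      move=> r k hk. case: (Z.eq_dec (G r k - G' r k - C) 0) => h; first lia.
      exfalso; apply: hno; exists r, k; split => //.
    have := heights_eq_mu Hh Hh' E => ->.
    by exists [::].
Qed.


Lemma half_spec (z : Z) : (exists q, z = 2 * q)%Z -> z = (2 * (z / 2))%Z.
Proof. move=> [q ->]. rewrite (Z.mul_comm 2 q) Z.div_mul //. lia. Qed.

Lemma upper_bound n (mu nu : mv n) : 0 < n -> locally_valid mu -> locally_valid nu ->
  exists s, ofg_walk mu nu s /\ size s <= (n * n).+1 %/ 2.
Proof.
move=> hn Vm Vn.
have Hh := valid_height Vm; have Hh' := valid_height Vn.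
set G := hgt mu in Hh *; set G' := hgt nu in Hh' *.
have G0 : G true 0%N = 0%Z by [].
have G0' : G' true 0%N = 0%Z by [].
have Par : forall r k, k < n -> exists q, (G r k - G' r k = 2 * q)%Z.
  move=> r k hk. have [q hq] := height_parity2 Hh Hh' r hk. exists q. lia.
pose xh k := ((G true k - G' true k) / 2)%Z.
pose yh k := ((G false k - G' false k) / 2)%Z.
have Ex : forall k, k < n -> (G true k - G' true k = 2 * xh k)%Z.
  move=> k hk; apply: half_spec; exact: Par.
have Ey : forall k, k < n -> (G false k - G' false k = 2 * yh k)%Z.
  move=> k hk; apply: half_spec; exact: Par.
pose w k := (xh k + yh k)%Z.
have Hw : forall j, j.+1 < n -> (Z.abs (w j.+1 - w j) <= 2)%Z.
  move=> j hj. rewrite /w.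
  have := Ex j (ltnW hj); have := Ex j.+1 hj; have := Ey j (ltnW hj); have := Ey j.+1 hj.
  have := adj_row true Hh hj; have := adj_row true Hh' hj;
  have := adj_row false Hh hj; have := adj_row false Hh' hj. lia.
have [c Hc] := upper_seq hn Hw.
have HE : Ev n G G' (2 * c)%Z.
  move=> r k hk. have [q hq] := Par r k hk. exists (q - c)%Z. lia.
have HP : Pot n G G' (2 * c) = (2 * zsum (fun j => Z.abs (w j - 2 * c)) n)%Z.
  rewrite /Pot.
  have -> : (2 * zsum (fun j => Z.abs (w j - 2 * c)) n =
             zsum (fun j => 2 * Z.abs (w j - 2 * c)) n)%Z.
    elim: (n) => [|m IHm]; first by [].
    change (zsum (fun j => Z.abs (w j - 2 * c)) m.+1) with (zsum (fun j => Z.abs (w j - 2 * c)) m + Z.abs (w m - 2 * c))%Z.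
    change (zsum (fun j => 2 * Z.abs (w j - 2 * c)) m.+1)%Z with (zsum (fun j => 2 * Z.abs (w j - 2 * c))%Z m + 2 * Z.abs (w m - 2 * c))%Z.
    lia.
  apply: zsum_ext => k hk. rewrite /w.
  have := Ex k hk; have := Ey k hk.
  have h1 : Z.abs (G true k - G false k) = 1%Z := adj_rung true Hh hk. have h2 : Z.abs (G' true k - G' false k) = 1%Z := adj_rung true Hh' hk. lia.
have Hdiv := divn_eq (n * n).+1 2.
have Hmod := ltn_pmod (n * n).+1 (isT : 0 < 2).
apply: (@walk_upper n ((n * n).+1 %/ 2) mu nu G G' (2 * c)%Z Hh Hh' HE).
rewrite HP. nia.
Qed.


Definition mu0 n : mv n := [ffun c : crease n => (val (val c)) %% 3 == 1].
Definition nu0 n : mv n := [ffun c : crease n => (val (val c)) %% 3 != 1].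
Definition Gm0 (r : bool) (k : nat) : Z := if r then Z.of_nat k else (Z.of_nat k + 1)%Z.
Definition Gn0 (r : bool) (k : nat) : Z := if r then (- Z.of_nat k)%Z else (- Z.of_nat k - 1)%Z.

Lemma mu0_height n : is_height (mu0 n) Gm0.
Proof.
rewrite /mu0; split; [|split] => k hk.
- rewrite (@mv_at_ffun n (fun m => m %% 3 == 1)); [|lia|lia].
  have -> : (3 * k) %% 3 == 1 = false by lia. rewrite /Gm0 /sg; cbv beta iota; lia.
- rewrite (@mv_at_ffun n (fun m => m %% 3 == 1)); [|lia|lia].
  have -> : (3 * k + 2) %% 3 == 1 = false by lia. rewrite /Gm0 /sg; cbv beta iota; lia.
- rewrite (@mv_at_ffun n (fun m => m %% 3 == 1)); [|lia|lia].
  have -> : (3 * k + 4) %% 3 == 1 = true by lia. rewrite /Gm0 /sg; cbv beta iota; lia.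
Qed.

Lemma nu0_height n : is_height (nu0 n) Gn0.
Proof.
rewrite /nu0; split; [|split] => k hk.
- rewrite (@mv_at_ffun n (fun m => m %% 3 != 1)); [|lia|lia].
  have -> : (3 * k) %% 3 != 1 = true by lia. rewrite /Gn0 /sg; cbv beta iota; lia.
- rewrite (@mv_at_ffun n (fun m => m %% 3 != 1)); [|lia|lia].
  have -> : (3 * k + 2) %% 3 != 1 = true by lia. rewrite /Gn0 /sg; cbv beta iota; lia.
- rewrite (@mv_at_ffun n (fun m => m %% 3 != 1)); [|lia|lia].
  have -> : (3 * k + 4) %% 3 != 1 = false by lia. rewrite /Gn0 /sg; cbv beta iota; lia.
Qed.

Lemma lower_bound n (s : seq (mv n)) : ofg_walk (mu0 n) (nu0 n) s -> (n * n).+1 %/ 2 <= size s.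
Proof.
move=> Hw.
have [G [Hh HP]] := walk_lower Hw (nu0_height n).
have [K HK] := heights_const (mu0_height n) Hh.
have LS := @lower_sum n (- K)%Z.
have : Pot n G Gn0 0 = zsum (fun k => Z.abs (2 * Z.of_nat k - (- K)) + Z.abs (2 * Z.of_nat k + 2 - (- K)))%Z n.
  apply: zsum_ext => k hk. rewrite !HK // /Gm0 /Gn0. lia.
move=> E; rewrite E in HP.
have Hdiv := divn_eq (n * n).+1 2.
have Hmod := ltn_pmod (n * n).+1 (isT : 0 < 2).
have Hm : ((n * n).+1 %% 2 = 1 - n %% 2)%N.
  rewrite !modn2 /= oddM andbb. by case: (odd n).
have Hm2 := ltn_pmod n (isT : 0 < 2).
nia.
Qed.

Theorem corollary5p9 (n : nat) : 2 <= n -> ofg_diameter n ((n * n).+1 %/ 2).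
Proof.
move=> hn; split.
- move=> mu nu Vm Vn. apply: upper_bound => //. lia.
- exists (mu0 n), (nu0 n); split.
  + exact: height_valid (mu0_height n).
  + exact: height_valid (nu0_height n).
  + move=> s Hs. exact: lower_bound.
Qed.
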